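(* Let $\mathbb{K}$ be an infinite field and $P$ a generic sequence of $n$ homogeneous polynomials in $\mathbb{K}[x_1,\ldots,x_n]$, and let $G_1$ be the reduced Gröbner basis of $\langle P\rangle$ w.r.t. DRL. If the Moreno-Socías conjecture holds, then the number of dense columns of the multiplication matrix $T_1$ equals $|\{g\in G_1:\ x_1\mid\mathrm{lt}(g)\}|$.
   Context: DRL is the degree reverse lexicographic ordering with $x_1<\cdots<x_n$. A property holds for a generic sequence if it holds on a nonempty Zariski-open subset of the coefficient space. Let $B=[\epsilon_1,\ldots,\epsilon_D]$ be the DRL canonical basis of $\mathbb{K}[x_1,\ldots,x_n]/\langle P\rangle$. The $j$-th column of $T_1$ is the coordinate vector of the normal form of $x_1\epsilon_j$. This column is called sparse if $x_1\epsilon_j\in B$ and dense otherwise. A monomial ideal $J$ is weakly reverse lexicographic if, for each minimal generator $\mathbf{t}$, every term of the same total degree greater than $\mathbf{t}$ w.r.t. DRL lies in $J$. Moreno-Socías conjecture: for every infinite field and every generic sequence of $n$ polynomials in $n$ variables, the DRL leading term ideal of the ideal it generates is weakly reverse lexicographic. *)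

(* Defs.v *)
From HB Require Import structures.
From mathcomp Require Import all_boot all_order all_algebra.
From mathcomp Require Import mpoly.

Set Implicit Arguments.
Unset Strict Implicit.
Unset Printing Implicit Defensive.
Import GRing.Theory.
Local Open Scope ring_scope.

(* Monomials in k variables x_1,...,x_k are 'X_{1..k}; the exponent of
   x_(i+1) in m is m i (i : 'I_k).  So x_1 is the variable of index 0. *)

(* DRL (degree reverse lexicographic) order with x_1 < ... < x_k:
   a <_DRL b iff deg a < deg b, or deg a = deg b and at the first index
   (starting from x_1, the smallest variable) where a and b differ, the
   exponent in a is larger. *)
Definition drl_lt (k : nat) (a b : 'X_{1..k}) : bool :=
  (mdeg a < mdeg b)%N ||
  ((mdeg a == mdeg b) &&
   [exists i : 'I_k, (b i < a i)%N &&
                     [forall j : 'I_k, (j < i)%N ==> (a j == b j)]]).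

Definition mdivides (k : nat) (a b : 'X_{1..k}) : bool :=
  [forall i : 'I_k, (a i <= b i)%N].

Definition is_lm (K : fieldType) (k : nat) (f : {mpoly K[k]}) (m : 'X_{1..k}) : bool :=
  (m \in msupp f) && all (fun m' => (m' == m) || drl_lt m' m) (msupp f).

Definition in_ideal (K : fieldType) (k s : nat) (P : 'I_s -> {mpoly K[k]})
  (f : {mpoly K[k]}) : Prop :=
  exists q : 'I_s -> {mpoly K[k]}, f = \sum_(i < s) q i * P i.

Definition lt_ideal (K : fieldType) (k s : nat) (P : 'I_s -> {mpoly K[k]})
  (m : 'X_{1..k}) : Prop :=
  exists f, in_ideal P f /\ f != 0 /\ is_lm f m.

Definition minimal_gen (k : nat) (J : 'X_{1..k} -> Prop) (t : 'X_{1..k}) : Prop :=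
  J t /\ forall t', J t' -> mdivides t' t -> t' = t.

Definition weakly_revlex (k : nat) (J : 'X_{1..k} -> Prop) : Prop :=
  forall t, minimal_gen J t ->
  forall m : 'X_{1..k}, mdeg m = mdeg t -> drl_lt t m -> J m.

(* The DRL canonical basis B of K[x]/<P>: monomials outside LT(<P>). *)
Definition in_canonical_basis (K : fieldType) (k s : nat)
  (P : 'I_s -> {mpoly K[k]}) (m : 'X_{1..k}) : Prop := ~ lt_ideal P m.

(* Column of T_1 indexed by eps in B is dense iff x_1 * eps is not in B. *)
Definition dense_column (K : fieldType) (k s : nat)
  (P : 'I_s -> {mpoly K[k.+1]}) (eps : 'X_{1..k.+1}) : Prop :=
  in_canonical_basis P eps /\
  ~ in_canonical_basis P (mnm_add eps (mnm1 (ord0 : 'I_k.+1))).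

Definition is_reduced_GB (K : fieldType) (k s : nat)
  (P : 'I_s -> {mpoly K[k]}) (G : seq {mpoly K[k]}) : Prop :=
  [/\ uniq G,
      (forall g, g \in G -> in_ideal P g /\ g != 0),
      (forall g, g \in G -> exists m, is_lm g m /\ g@_m = 1),
      (forall m, lt_ideal P m ->
         exists2 g, g \in G & exists t, is_lm g t /\ mdivides t m) &
      (forall g g', g \in G -> g' \in G -> g != g' ->
         forall t, is_lm g t -> forall m, m \in msupp g' -> ~~ mdivides t m)].

Definition x1_divides_lt (K : fieldType) (k : nat) (g : {mpoly K[k.+1]}) : bool :=
  has (fun m => is_lm g m && (0 < m ord0)%N) (msupp g).

(* Coefficient index set for a sequence of s homogeneous polynomials in k
   variables of degrees d_1..d_s: pairs (i, m) with m a monomial of degree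
   exactly d i. *)
Definition coef_index (k s : nat) (d : 'I_s -> nat) : predArgType :=
  {p : 'I_s * 'X_{1..k < (\max_(i < s) d i).+1} | mdeg (val p.2) == d p.1}.

Definition hom_seq (K : fieldType) (k s : nat) (d : 'I_s -> nat)
  (c : coef_index k d -> K) (i : 'I_s) : {mpoly K[k]} :=
  \sum_(p : coef_index k d | (val p).1 == i) c p *: 'X_[val (val p).2].

(* A property Q of coefficient vectors (points of K^T, T finite) holds
   generically iff it holds on a nonempty Zariski-open subset, i.e. on the
   complement of the zero set V(S) of some finite family S of polynomials
   in the coordinates, this complement being nonempty. *)
Definition generic (K : fieldType) (T : finType) (Q : (T -> K) -> Prop) : Prop :=
  exists S : seq {mpoly K[#|T|]},
    (exists c : T -> K, has (fun h => h.@[fun j => c (enum_val j)] != 0) S) /\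
    (forall c : T -> K,
       has (fun h => h.@[fun j => c (enum_val j)] != 0) S -> Q c).

Definition infinite_field (K : fieldType) : Prop :=
  ~ exists s : seq K, forall x : K, x \in s.

Definition moreno_socias_conjecture : Prop :=
  forall (L : fieldType), infinite_field L ->
  forall (k : nat) (d : 'I_k -> nat),
    generic (fun c : coef_index k d -> L => weakly_revlex (lt_ideal (hom_seq c))).

(* Main.v *)
Require Import Defs.
From HB Require Import structures.
From mathcomp Require Import all_boot all_order all_algebra.
From mathcomp Require Import mpoly.
From Stdlib Require Import Classical.
Set Implicit Arguments.
Unset Strict Implicit.
Unset Printing Implicit Defensive.
Import GRing.Theory.
Local Open Scope ring_scope.

Section Aux.
Variable k : nat.
Implicit Types a b w : 'X_{1..k}.

Lemma drl_lt_asym a b : drl_lt a b -> drl_lt b a -> False.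
Proof.
rewrite /drl_lt => /orP [H1|/andP [/eqP E /existsP [i /andP [Hi /forallP Hj]]]]
   /orP [H2|/andP [/eqP E2 /existsP [i' /andP [Hi' /forallP Hj']]]].
- by move: (ltn_trans H1 H2); rewrite ltnn.
- by move: H1; rewrite E2 ltnn.
- by move: H2; rewrite E ltnn.
- case: (ltngtP i i') => Hii.
  + by move: (Hj' i); rewrite Hii /= => /eqP E3; move: Hi; rewrite E3 ltnn.
  + by move: (Hj i'); rewrite Hii /= => /eqP E3; move: Hi'; rewrite E3 ltnn.
  + have Hii2 : i = i' by apply: val_inj.
    by subst; move: (ltn_trans Hi Hi'); rewrite ltnn.
Qed.

Lemma drl_ltD a b w : drl_lt a b -> drl_lt (w + a)%MM (w + b)%MM.
Proof.
rewrite /drl_lt !mdegD ltn_add2l eqn_add2l.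
case/orP => [->//|/andP [-> /existsP [i /andP [Hi /forallP Hj]]]].
apply/orP; right; apply/existsP; exists i; rewrite !mnmDE ltn_add2l Hi /=.
by apply/forallP => j; apply/implyP => /(implyP (Hj j)); rewrite !mnmDE eqn_add2l.
Qed.

Lemma mdividesP a b : reflect (forall i, a i <= b i)%N (mdivides a b).
Proof. exact: forallP. Qed.

Lemma mdivides_trans a b c : mdivides a b -> mdivides b c -> mdivides a c.
Proof.
move=> /mdividesP H1 /mdividesP H2; apply/mdividesP => i; exact: leq_trans (H1 i) (H2 i).
Qed.

Lemma mdivides_anti a b : mdivides a b -> mdivides b a -> a = b.
Proof.
move=> /mdividesP H1 /mdividesP H2; apply/mnmP => i; apply/eqP; rewrite eqn_leq H1 H2 //.
Qed.

Variable K : fieldType.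

Lemma is_lm_uniq (f : {mpoly K[k]}) a b : is_lm f a -> is_lm f b -> a = b.
Proof.
move=> /andP [Ha /allP Aa] /andP [Hb /allP Ab].
case/orP: (Aa _ Hb) => [/eqP//|H1].
case/orP: (Ab _ Ha) => [/eqP//|H2].
by case: (drl_lt_asym H1 H2).
Qed.

Lemma is_lmMX (f : {mpoly K[k]}) a w : is_lm f a -> is_lm (f * 'X_[w]) (w + a)%MM.
Proof.
move=> /andP [Ha /allP Aa]; apply/andP; split.
  by rewrite mcoeff_msupp mcoeffMX -mcoeff_msupp.
apply/allP => m; rewrite (perm_mem (msuppMX _ _)) => /mapP [m' Hm' ->].
case/orP: (Aa _ Hm') => [/eqP->|H]; first by rewrite eqxx.
by rewrite drl_ltD ?orbT.
Qed.

Variable s : nat.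
Variable P : 'I_s -> {mpoly K[k]}.

Lemma lt_ideal_closed a b : lt_ideal P a -> mdivides a b -> lt_ideal P b.
Proof.
move=> [f [[q Hq] [Hf0 Hlm]]] /mdividesP Hab.
have Hle : (a <= b)%MM by apply/mnm_lepP.
exists (f * 'X_[b - a]); split; [|split].
- exists (fun i => q i * 'X_[b - a]); rewrite Hq mulr_suml.
  by apply: eq_bigr => i _; rewrite mulrAC.
- move: Hlm => /andP [Ha _].
  apply/eqP => /(congr1 (fun p => p@_((b - a) + a)%MM)).
  rewrite mcoeffMX mcoeff0 => H.
  by move: Ha; rewrite mcoeff_msupp H eqxx.
- by rewrite -[in X in is_lm _ X](submK Hle); apply: is_lmMX.
Qed.

End Aux.
Section Main.
Variables (K : fieldType) (n s : nat) (P : 'I_s -> {mpoly K[n.+1]}).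
Local Notation J := (lt_ideal P).
Local Notation e := (U_(ord0 : 'I_n.+1))%MM.

Definition lm (g : {mpoly K[n.+1]}) : 'X_{1..n.+1} :=
  nth 0%MM (msupp g) (find (fun m => is_lm g m) (msupp g)).

Lemma lm_spec g m : is_lm g m -> lm g = m.
Proof.
move=> H; apply: (is_lm_uniq _ H); rewrite /lm.
apply: (nth_find _ (a := fun m => is_lm g m)); apply/hasP; exists m => //.
by case/andP: H.
Qed.

Variable G : seq {mpoly K[n.+1]}.
Hypothesis HG : is_reduced_GB P G.

Lemma lmG g : g \in G -> is_lm g (lm g).
Proof.
case: HG => _ _ H3 _ _ /H3 [m [Hm _]]; by rewrite (lm_spec Hm).
Qed.

Lemma lmG_supp g : g \in G -> lm g \in msupp g.
Proof. by move/lmG/andP => []. Qed.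

Lemma J_lmG g : g \in G -> J (lm g).
Proof.
move=> Hg; case: HG => _ H2 _ _ _; case: (H2 _ Hg) => Hi Hn.
by exists g; split => //; split => //; apply: lmG.
Qed.

Lemma lmG_cov m : J m -> exists2 g, g \in G & mdivides (lm g) m.
Proof.
case: HG => _ _ _ H4 _ /H4 [g Hg [t [Ht Hd]]]; exists g => //.
by rewrite (lm_spec Ht).
Qed.

Lemma lmG_red g g' : g \in G -> g' \in G -> mdivides (lm g) (lm g') -> g = g'.
Proof.
move=> Hg Hg' Hd; apply/eqP; apply/negPn/negP => Hne.
case: HG => _ _ _ _ H5.
by move: (H5 _ _ Hg Hg' Hne _ (lmG Hg) _ (lmG_supp Hg')); rewrite Hd.
Qed.

Lemma minimal_lmG g : g \in G -> minimal_gen J (lm g).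
Proof.
move=> Hg; split; first exact: J_lmG.
move=> t' Ht' Hd; case: (lmG_cov Ht') => g' Hg' Hd'.
have E := lmG_red Hg' Hg (mdivides_trans Hd' Hd); subst g'.
exact: mdivides_anti.
Qed.

Lemma x1_divP g : g \in G -> x1_divides_lt g = (0 < lm g ord0)%N.
Proof.
move=> Hg; apply/hasP/idP => [[m Hm /andP [Hl Hp]]|Hp].
  by rewrite (lm_spec Hl).
by exists (lm g); [apply: lmG_supp | rewrite lmG].
Qed.

Lemma e_le (m : 'X_{1..n.+1}) : (0 < m ord0)%N -> (e <= m)%MM.
Proof.
move=> Hp; apply/mnm_lepP => i; rewrite mnm1E; case: eqP => [<-//|_]; exact: leq0n.
Qed.

Lemma main_combi : weakly_revlex J ->
    exists cols : seq 'X_{1..n.+1},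
      [/\ uniq cols,
          (forall eps, eps \in cols <-> dense_column P eps) &
          size cols = count (@x1_divides_lt K n) G].
Proof.
move=> Hw.
exists [seq (lm g - e)%MM | g <- G & x1_divides_lt g]; split.
- rewrite map_inj_in_uniq; first by apply: filter_uniq; case: HG.
  move=> g g' Hg1 Hg2 E; move: Hg1 Hg2; rewrite !mem_filter => /andP [Hx Hg] /andP [Hx' Hg'].
  apply: (lmG_red Hg Hg').
  rewrite (x1_divP Hg) in Hx; rewrite (x1_divP Hg') in Hx'.
  by rewrite -(submK (e_le Hx)) -(submK (e_le Hx')) E; apply/mdividesP.
- move=> eps; split.
  + case/mapP => g; rewrite (mem_filter (@x1_divides_lt K n)) => /andP [Hx Hg] ->.
    rewrite (x1_divP Hg) in Hx.
    rewrite /dense_column /in_canonical_basis (submK (e_le Hx)).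
    split; last by move=> H; apply: H; apply: J_lmG.
    move=> /lmG_cov [g' Hg' Hd].
    have Hd2 : mdivides (lm g') (lm g).
      apply: (mdivides_trans Hd); apply/mdividesP => i; rewrite mnmBE; exact: leq_subr.
    have E := lmG_red Hg' Hg Hd2; subst g'.
    move/mdividesP: Hd => /(_ ord0); rewrite mnmBE mnm1E eqxx.
    by case: (lm g ord0) Hx => // m _; rewrite subn1 /= ltnn.
  + rewrite /dense_column /in_canonical_basis => [[Hne Hj]].
    have {}Hj : J (eps + e)%MM by apply: NNPP.
    case: (lmG_cov Hj) => g Hg Hd.
    have Et : lm g = (eps + e)%MM.
      apply: NNPP => Hneq.
      move/mdividesP: (Hd) => Hdi.
      have H0 := Hdi ord0; rewrite mnmDE mnm1E eqxx addn1 in H0.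
      case: (ltnP (lm g ord0) (eps ord0).+1) => H0'.
      * apply: Hne; apply: (lt_ideal_closed (J_lmG Hg)).
        apply/mdividesP => i; case: (eqVneq i ord0) => [->|Hi]; first by [].
        by move: (Hdi i); rewrite mnmDE mnm1E (eq_sym ord0) (negbTE Hi) addn0.
      * have Eq0 : lm g ord0 = (eps ord0).+1 by apply/eqP; rewrite eqn_leq H0 H0'.
        have [j Hj'] : exists j, lm g j != (eps + e)%MM j.
          apply: NNPP => Hn; apply: Hneq; apply/mnmP => j.
          by apply/eqP; apply: NNPP => Hn2; apply: Hn; exists j; apply/negP.
        have Hj0 : j != ord0.
          by apply/eqP => Ej; move: Hj'; rewrite Ej Eq0 mnmDE mnm1E eqxx addn1 eqxx.
        have Hlt : (lm g j < eps j)%N.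
          move: Hj' (Hdi j); rewrite mnmDE mnm1E (eq_sym ord0) (negbTE Hj0) addn0.
          by rewrite ltn_neqAle => -> ->.
        have Hpos : (0 < lm g ord0)%N by rewrite Eq0.
        pose s' := (lm g - e + U_(j))%MM.
        have Hdeg : mdeg s' = mdeg (lm g).
          by rewrite /s' -{2}(submK (e_le Hpos)) !mdegD !mdeg1.
        have Hs : J s'.
          apply: (Hw _ (minimal_lmG Hg)) => //.
          rewrite /drl_lt Hdeg eqxx ltnn /=.
          apply/existsP; exists ord0; apply/andP; split.
            rewrite /s' mnmDE mnmBE !mnm1E eqxx (negbTE Hj0) addn0.
            by rewrite Eq0 subn1 /= ltnSn.
          by apply/forallP => i; apply/implyP; rewrite ltn0.
        apply: Hne; apply: (lt_ideal_closed Hs).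
        apply/mdividesP => i; rewrite /s' mnmDE mnmBE !mnm1E.
        case: (eqVneq i ord0) => [->|Hi].
          by rewrite (negbTE Hj0) addn0 Eq0 subn1.
        rewrite subn0.
        case: (eqVneq j i) => [<-|Hji]; first by rewrite addn1.
        by move: (Hdi i); rewrite addn0 mnmDE mnm1E (eq_sym ord0) (negbTE Hi) addn0.
    apply/mapP; exists g.
      by rewrite (mem_filter (@x1_divides_lt K n)) (x1_divP Hg) Et Hg mnmDE mnm1E eqxx addn1 andbT.
    by rewrite Et addmK.
- by rewrite size_map size_filter.
Qed.

End Main.

Theorem corollary6p7 (K : fieldType) (n : nat) (d : 'I_n.+1 -> nat) :
  infinite_field K ->
  moreno_socias_conjecture ->
  generic (fun c : coef_index n.+1 d -> K =>
    forall G : seq {mpoly K[n.+1]}, is_reduced_GB (hom_seq c) G ->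
    exists cols : seq 'X_{1..n.+1},
      [/\ uniq cols,
          (forall eps, eps \in cols <-> dense_column (hom_seq c) eps) &
          size cols = count (@x1_divides_lt K n) G]).
Proof.
move=> Hinf HMS; case: (HMS K Hinf n.+1 d) => S [Hne HS].
exists S; split => // c Hc G HG.
exact: main_combi HG (HS c Hc).
Qed.
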